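(* Let $a,b$ be positive integers and define the sequence $(U_n)_{n\ge1}$ by $U_1=a$, $U_2=b$ and $U_{n+2}=U_{n+1}+U_n$ for $n\ge1$. Then $(U_n)$ is exactly realizable if and only if $b=3a$.
   Context: For a homeomorphism $f:X\to X$ of a compact metric space $X$, let $\mathrm{Per}_n(f)=\#\{x\in X\mid f^n x=x\}$. A sequence $(U_n)_{n\ge1}$ of non-negative integers is called exactly realizable if there exist a compact metric space $X$ and a homeomorphism $f:X\to X$ with $\mathrm{Per}_n(f)=U_n$ for all $n\ge1$ (in particular each $\mathrm{Per}_n(f)$ is finite). *)

(* Defs.v *)
From HB Require Import structures.
From mathcomp Require Import all_boot all_order all_algebra.
From mathcomp Require Import all_classical all_reals all_analysis.
Set Implicit Arguments. Unset Strict Implicit. Unset Printing Implicit Defensive.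
Import Order.TTheory GRing.Theory Num.Theory.
Local Open Scope classical_set_scope.

Definition per_set (X : Type) (f : X -> X) (n : nat) : set X :=
  [set x | iter n f x = x].

Definition homeomorphism (X : topologicalType) (f : X -> X) : Prop :=
  exists g : X -> X, [/\ cancel f g, cancel g f, continuous f & continuous g].

Definition exactly_realizable (R : realType) (U : nat -> nat) : Prop :=
  exists (X : metricType R) (f : X -> X),
    [/\ compact [set: X], homeomorphism f &
        forall n : nat, (0 < n)%N -> card_eq (per_set f n) `I_(U n)].

(* Main.v *)
Require Import Defs.
From HB Require Import structures.
From mathcomp Require Import all_boot all_order all_algebra.
From mathcomp Require Import finmap.
From mathcomp Require Import all_classical all_reals all_analysis.
From mathcomp Require Import intdiv zify ring.
Set Implicit Arguments. Unset Strict Implicit. Unset Printing Implicit Defensive.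
Import Order.TTheory GRing.Theory Num.Theory.
Local Open Scope classical_set_scope.

Definition gold (x : nat -> bool) := forall i, ~~ (x i && x i.+1).
Definition hasper (x : nat -> bool) n := forall i, x (i + n) = x i.
Definition sh (x : nat -> bool) : nat -> bool := fun i => x i.+1.

Record XT (R : realType) (a : nat) : Type := MkX {
  xs : nat -> bool; xc : 'I_a.+1; xgold : gold xs;
  xperd : exists n, (0 < n)%N /\ hasper xs n }.

HB.instance Definition _ (R : realType) a := gen_eqMixin (XT R a).
HB.instance Definition _ (R : realType) a := gen_choiceMixin (XT R a).

Lemma hasper_mul x p k : hasper x p -> forall i, x (i + k * p) = x i.
Proof.
move=> hp i; elim: k => [|k IH]; first by rewrite mul0n addn0.
by rewrite mulSnr addnA hp.
Qed.

Lemma hasper_mod x p : hasper x p -> forall i, x i = x (i %% p).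
Proof.
move=> hp i; rewrite {1}(divn_eq i p) addnC hasper_mul //.
Qed.

Lemma hasper_sh x p n : (0 < p)%N -> hasper x p -> hasper (sh x) n <-> hasper x n.
Proof.
move=> p0 hp; split => h i; last by rewrite /sh -addSn h.
have hj : (i + p = (i + p).-1.+1)%N by rewrite prednK // addn_gt0 p0 orbT.
have e1 : x (i + n) = x (i + n + p) by rewrite hp.
have e2 : x i = x (i + p) by rewrite hp.
have e3 : (i + n + p = ((i + p).-1 + n).+1)%N by rewrite -addSn -hj addnAC.
rewrite e1 e2 e3 hj; exact: (h (i + p).-1).
Qed.

Lemma gold_sh x : gold x -> gold (sh x).
Proof. by move=> g i; apply: g. Qed.

Lemma perd_sh x : (exists n, (0 < n)%N /\ hasper x n) -> exists n, (0 < n)%N /\ hasper (sh x) n.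
Proof. by case=> n [n0 hn]; exists n; split => // i; rewrite /sh -addSn hn. Qed.

Section Cons.
Variables (R : realType) (a : nat).
Local Notation X := (XT R a).

Lemma XT_eq (u v : X) : xs u = xs v -> xc u = xc v -> u = v.
Proof.
case: u => xu cu gu pu; case: v => xv cv gv pv /= e1 e2.
subst; congr MkX; exact: Prop_irrelevance.
Qed.

Definition perP (x : nat -> bool) : pred nat := fun n => (0 < n)%N && `[< hasper x n >].

Lemma perex (u : X) : exists n, perP (xs u) n.
Proof. by case: (xperd u) => n [n0 hn]; exists n; rewrite /perP n0; apply/asboolP. Qed.

Definition per (u : X) := ex_minn (perex u).

Definition F (u : X) : X := @MkX R a (sh (xs u)) (xc u) (gold_sh (xgold u)) (perd_sh (xperd u)).

Lemma perP_sh (u : X) n : perP (sh (xs u)) n = perP (xs u) n.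
Proof.
rewrite /perP; case: (xperd u) => p [p0 hp].
by rewrite (propext (hasper_sh n p0 hp)).
Qed.

Lemma per_F u : per (F u) = per u.
Proof.
rewrite /per; case: ex_minnP => m Pm mmin; case: ex_minnP => m' Pm' m'min.
apply/eqP; rewrite eqn_leq; apply/andP; split.
  by apply: mmin; rewrite /= perP_sh.
by apply: m'min; rewrite -perP_sh.
Qed.

Lemma per_pos u : (0 < per u)%N.
Proof. by rewrite /per; case: ex_minnP => m /andP[]. Qed.

Lemma per_hasper u : hasper (xs u) (per u).
Proof. by rewrite /per; case: ex_minnP => m /andP[_ /asboolP]. Qed.

Definition isp0 (u : X) : bool := `[< xs u = (fun _ => false) /\ xc u = ord0 >].

Lemma isp0_F u : isp0 (F u) = isp0 u.
Proof.
rewrite /isp0; apply/asboolP/asboolP => -[h1 h2]; split => //=.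
  apply: funext => i; have := per_hasper u i; move=> <-.
  have := congr1 (fun g => g (i + (per u)).-1) h1; rewrite /= /sh prednK //.
  by rewrite addn_gt0 per_pos orbT.
by rewrite h1.
Qed.

Lemma isp0_eq u v : isp0 u -> isp0 v -> u = v.
Proof. by move=> /asboolP[h1 h2] /asboolP[h3 h4]; apply: XT_eq; rewrite ?h1 ?h2 ?h3 ?h4. Qed.

Local Open Scope ring_scope.

Definition w (u : X) : R := if isp0 u then 0 else ((per u).+1%:R)^-1.

Lemma w_ge0 u : 0 <= w u.
Proof. by rewrite /w; case: ifP => // _; rewrite invr_ge0 ler0n. Qed.

Lemma w_gt0 u : ~~ isp0 u -> 0 < w u.
Proof. by rewrite /w => /negbTE ->; rewrite invr_gt0 ltr0n. Qed.

Lemma w_F u : w (F u) = w u.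
Proof. by rewrite /w isp0_F per_F. Qed.

Definition d (u v : X) : R := if u == v then 0 else Num.max (w u) (w v).

Lemma d_xx u : d u u = 0.
Proof. by rewrite /d eqxx. Qed.

Lemma d_pos u v : d u v = 0 -> u = v.
Proof.
rewrite /d; case: eqP => // uv h.
have hu : w u <= 0 by rewrite -h le_max lexx.
have hv : w v <= 0 by rewrite -h le_max lexx orbT.
case: (boolP (isp0 u)) => pu; last by have := w_gt0 pu; rewrite ltNge hu.
case: (boolP (isp0 v)) => pv; first by rewrite (isp0_eq pu pv).
by have := w_gt0 pv; rewrite ltNge hv.
Qed.

Lemma d_sym u v : d u v = d v u.
Proof. by rewrite /d eq_sym; case: eqP => // _; rewrite maxC. Qed.

Lemma d_ge0 u v : 0 <= d u v.
Proof. by rewrite /d; case: eqP => // _; rewrite le_max w_ge0. Qed.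

Lemma d_ge_wl u v : u != v -> w u <= d u v.
Proof. by rewrite /d => /negbTE ->; rewrite le_max lexx. Qed.

Lemma d_tri y x z : d x z <= d x y + d y z.
Proof.
rewrite {1}/d; case: eqP => xz; first by rewrite addr_ge0 // d_ge0.
rewrite ge_max; apply/andP; split.
  case: (eqVneq x y) => xy.
    subst y; rewrite d_xx add0r /d; case: eqP => // _; by rewrite le_max lexx.
  by apply: le_trans (d_ge_wl xy) _; rewrite lerDl d_ge0.
case: (eqVneq z y) => zy.
  subst y; rewrite d_xx addr0 d_sym /d; case: eqP => //; [by move=> e; exfalso; apply: xz| by move=> _; rewrite le_max lexx].
by apply: le_trans (d_ge_wl zy) _; rewrite d_sym lerDr d_ge0.
Qed.

HB.instance Definition _ := @isMetric.Build R X d d_xx d_pos d_sym d_tri.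


Lemma mdistE (u v : X) : mdist u v = d u v.
Proof. by []. Qed.

Lemma xs_iter n (u : X) : xs (iter n F u) = fun i => xs u (i + n).
Proof.
elim: n => [|n IH] /=; first by apply: funext => i; rewrite addn0.
by rewrite IH; apply: funext => i; rewrite /sh addSnnS.
Qed.

Lemma xc_iter n (u : X) : xc (iter n F u) = xc u.
Proof. by elim: n => //= n ->. Qed.

Lemma iter_F_id n (u : X) : iter n F u = u <-> hasper (xs u) n.
Proof.
split => [e i|h]; first by rewrite -{2}e xs_iter.
by apply: XT_eq; rewrite ?xc_iter // xs_iter; apply: funext => i; rewrite h.
Qed.

Definition G (u : X) : X := iter (per u).-1 F u.

Lemma FK : cancel F G.
Proof.
move=> u; rewrite /G per_F -iterSr prednK ?per_pos //.
by apply/iter_F_id/per_hasper.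
Qed.

Lemma GK : cancel G F.
Proof.
move=> u; rewrite /G -iterS prednK ?per_pos //.
by apply/iter_F_id/per_hasper.
Qed.

Lemma d_F u v : d (F u) (F v) = d u v.
Proof.
by rewrite /d !w_F (inj_eq (can_inj FK)).
Qed.

Lemma d_G u v : d (G u) (G v) = d u v.
Proof. by rewrite -d_F !GK. Qed.

Lemma iso_cont (h : X -> X) : (forall u v, d (h u) (h v) = d u v) -> continuous h.
Proof.
move=> hd x.
have FF : Filter (nbhs x) by exact: nbhs_filter.
apply/(@cvg_ballP R X X (nbhs x) FF) => e e0; apply/nbhs_ballP; exists e => // t.
by rewrite /= !ballEmdist /= !mdistE hd.
Qed.

Lemma F_homeo : homeomorphism F.
Proof. by exists G; split; [exact: FK|exact: GK|apply: iso_cont; exact: d_F|apply: iso_cont; exact: d_G]. Qed.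


Definition zs : nat -> bool := fun _ => false.
Lemma gold_zs : gold zs. Proof. by []. Qed.
Lemma perd_zs : exists n, (0 < n)%N /\ hasper zs n.
Proof. by exists 1%N. Qed.
Definition p0 : X := @MkX R a zs ord0 gold_zs perd_zs.

Lemma isp0_p0 : isp0 p0. Proof. by apply/asboolP. Qed.
Lemma w_p0 : w p0 = 0. Proof. by rewrite /w isp0_p0. Qed.
Lemma d_p0 u : d p0 u = w u.
Proof.
rewrite /d; case: eqP => [<-|_]; first by rewrite w_p0.
by rewrite w_p0 max_r // w_ge0.
Qed.

Lemma finite_per M : finite_set [set u : X | (per u < M)%N].
Proof.
pose phi (u : X) := ([ffun i : 'I_M => xs u i], (inord (per u) : 'I_M.+1), xc u).
have inj : {in [set u : X | (per u < M)%N] &, injective phi}.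
  move=> u v; rewrite !in_setE /= => hu hv [e1 e2 e3].
  have ep : per u = per v.
    by move: e2 => /(congr1 val) /=; rewrite !inordK // ltnS ltnW.
  apply: XT_eq => //; apply: funext => i.
  rewrite (hasper_mod (per_hasper u)) (hasper_mod (per_hasper v)) -ep.
  have lt : (i %% per u < M)%N by exact: ltn_trans (ltn_pmod i (per_pos u)) hu.
  by have := congr1 (fun g : {ffun 'I_M -> bool} => g (Ordinal lt)) e1; rewrite !ffunE.
rewrite -(eq_finite_set (inj_card_eq inj)); exact: finite_finset.
Qed.

Lemma X_compact : compact [set: X].
Proof.
move=> Fl PF _.
case: (pselect (cluster Fl p0)) => [cl|ncl]; first by exists p0.
have [A [B [FA [nB AB]]]] : exists A B, Fl A /\ nbhs p0 B /\ ~ (A `&` B !=set0).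
  apply: contra_notP ncl => h A B FA nB; apply: contra_notP h => h.
  by exists A, B.
have [e e0 eB] := (nbhs_ballP _ _).1 nB.
have AS : A `<=` [set u | e <= w u].
  move=> u Au /=; rewrite leNgt; apply/negP => wu; apply: AB; exists u; split => //.
  by apply: eB; rewrite /= ballEmdist /= mdistE d_p0.
pose M := Num.Def.archi_bound (e^-1).
have SM : [set u | e <= w u] `<=` [set u : X | (per u < M)%N].
  move=> u /=; rewrite /w; case: ifP => _; first by rewrite leNgt e0.
  rewrite -[e]invrK lef_pV2 ?posrE ?invr_gt0 ?ltr0n // => h.
  have ie : (0 : R) <= e^-1 by rewrite invr_ge0 ltW.
  have := le_lt_trans h (archi_boundP ie).
  by rewrite ltr_nat ltnS => /ltnW.
have finS : finite_set [set u : X | e <= w u].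
  exact: sub_finite_set SM (finite_per M).
have FS : Fl [set u : X | e <= w u] by apply: filterS FA.
have [u [_ cu]] := finite_compact finS PF FS.
by exists u.
Qed.

End Cons.

Fixpoint allb n : seq (seq bool) :=
  if n is n'.+1 then [seq true :: w | w <- allb n'] ++ [seq false :: w | w <- allb n']
  else [:: [::]].
Fixpoint lg (w : seq bool) : bool :=
  if w is b :: w' then lg w' && ~~ (b && head false w') else true.
Definition cyc w := lg w && ~~ (head false w && last false w).
Definition cnt n := count cyc (allb n).

Lemma mem_allb n w : (w \in allb n) = (size w == n).
Proof.
elim: n w => [|n IH] [|b w] //=; rewrite mem_cat.
  by apply/negbTE; rewrite negb_or; apply/andP; split; apply/mapP => -[].
rewrite eqSS -IH; apply/orP/idP.
  by case=> /mapP[v hv [_ ->]].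
by move=> h; case: b; [left|right]; apply/mapP; exists w.
Qed.

Lemma uniq_allb n : uniq (allb n).
Proof.
elim: n => //= n IH; rewrite cat_uniq; apply/and3P; split.
- by rewrite map_inj_uniq // => ? ? [].
- by apply/hasPn => _ /mapP[v _ ->]; apply/mapP => -[].
- by rewrite map_inj_uniq // => ? ? [].
Qed.

Lemma lgP w : lg w <-> (forall j, (j.+1 < size w)%N -> ~~ (nth false w j && nth false w j.+1)).
Proof.
elim: w => [|b w IH] /=; first by split.
split.
  move=> /andP[/IH h hb] [|j] /=; last by rewrite ltnS; apply: h.
  by case: w hb {IH h} => [|c w] //=; rewrite andbF.
move=> h; apply/andP; split.
  by apply/IH => j hj; apply: (h j.+1).
by case: w h {IH} => [|c w] h /=; [rewrite andbF | apply: (h 0%N)].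
Qed.

Lemma count_split2 (T : eqType) (P Q1 Q2 : pred T) (s : seq T) :
  (forall x, x \in s -> (P x : nat) = Q1 x + Q2 x) ->
  count P s = count Q1 s + count Q2 s.
Proof.
elim: s => //= x s IH H; rewrite IH ?H ?mem_head //; last by move=> y ys; apply: H; rewrite inE ys orbT.
by rewrite addnACA.
Qed.

Definition N n h l := count (fun w => [&& lg w, head false w == h & last false w == l]) (allb n).

Lemma cnt_N n : cnt n = N n false false + N n false true + N n true false.
Proof.
rewrite /cnt /N.
transitivity (count (fun w => lg w && ~~ head false w) (allb n) +
  count (fun w => [&& lg w, head false w == true & last false w == false]) (allb n)).
  apply: count_split2 => w _; rewrite /cyc.
  by case: (lg w); case: (head false w); case: (last false w).
congr (_ + _); apply: count_split2 => w _.
by case: (lg w); case: (head false w); case: (last false w).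
Qed.

Lemma allb_ne n w : w \in allb n.+1 -> w <> [::].
Proof. by rewrite mem_allb => /eqP h e; rewrite e in h. Qed.

Lemma N_rec n h l : N n.+2 h l = if h then N n.+1 false l else N n.+1 true l + N n.+1 false l.
Proof.
rewrite /N [allb n.+2]/= count_cat !count_map.
have L : forall w b, w \in allb n.+1 -> last b w = last false w.
  by move=> w b /allb_ne; case: w.
rewrite (eq_in_count (a2 := fun w => [&& lg w, ~~ head false w, true == h & last false w == l])); last first.
  by move=> w hw /=; rewrite (L _ _ hw); case: (lg w).
rewrite [X in _ + X](eq_in_count (a2 := fun w => [&& lg w, false == h & last false w == l])); last first.
  by move=> w hw /=; case: (lg w); rewrite /= ?andbT.
case: h.
  rewrite [X in _ + X](eq_count (a2 := pred0)) ?count_pred0 ?addn0; last by move=> w /=; rewrite !andbF.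
  by apply: eq_count => w /=; case: (head false w); rewrite ?andbF ?andbT.
rewrite (eq_count (a2 := pred0)) ?count_pred0 ?add0n; last by move=> w /=; rewrite !andbF.
apply: count_split2 => w _ /=.
by case: (lg w); case: (head false w); case: (last false w == l).
Qed.

Lemma N_fib n h l : N n.+3 h l = N n.+2 h l + N n.+1 h l.
Proof.
case: h.
  by rewrite (N_rec n.+1 true) (N_rec n true) (N_rec n false) addnC.
by rewrite (N_rec n.+1 false) (N_rec n true) addnC.
Qed.

Lemma cnt_rec n : cnt n.+3 = cnt n.+2 + cnt n.+1.
Proof. rewrite !cnt_N !N_fib; lia. Qed.

Lemma cnt1 : cnt 1 = 1%N. Proof. by []. Qed.
Lemma cnt2 : cnt 2 = 3%N. Proof. by []. Qed.

Lemma cyc_mkseq x n : (0 < n)%N -> gold x -> hasper x n -> cyc (mkseq x n).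
Proof.
move=> n0 g hp; rewrite /cyc; apply/andP; split.
  apply/lgP => j; rewrite size_mkseq => hj.
  rewrite nth_mkseq; last by apply: ltnW.
  rewrite nth_mkseq //.
case: n n0 hp => // n _ hp.
rewrite -nth_last size_mkseq nth_mkseq //.
have -> : head false (mkseq x n.+1) = x 0%N by [].
rewrite andbC; have := g n; rewrite -(hp 0%N) add0n; exact.
Qed.

Lemma gold_nth w n : size w = n -> cyc w -> gold (fun i => nth false w (i %% n)).
Proof.
move=> sw /andP[/lgP hl hc] i.
have [n00|n0] := posnP n.
  by move: sw; rewrite n00 => /size0nil ->; rewrite !nth_nil.
have hr := ltn_pmod i n0.
rewrite modnS; case: ifP => hd.
  have e : (i %% n).+1 = n.
    have : (n %| (i %% n).+1)%N.
      by move: hd; rewrite {1}(divn_eq i n) -addnS dvdn_addr ?dvdn_mull.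
    move=> /dvdn_leq h; apply/eqP; rewrite eqn_leq h // andbT; exact: hr.
  have -> : (i %% n = (size w).-1)%N by rewrite sw -[in RHS]e.
  rewrite nth_last; move: hc; case: w {hl sw e hd hr} => [|b w]; first by [].
  by rewrite /= andbC.
have lt : ((i %% n).+1 < n)%N.
  rewrite ltn_neqAle hr andbT; apply/negP => /eqP e; move: hd.
  by rewrite {1}(divn_eq i n) -addnS dvdn_addr ?dvdn_mull // e dvdnn.
by apply: hl; rewrite sw.
Qed.

Section Count.
Variables (R : realType) (a : nat).
Local Notation X := (XT R a).

Lemma per_card n : (0 < n)%N -> card_eq (per_set (@F R a) n) `I_(cnt n * a.+1).
Proof.
move=> n0.
pose phi (u : X) := (mkseq (xs u) n, xc u).
have inj : {in per_set (@F R a) n &, injective phi}.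
  move=> u v; rewrite !in_setE /per_set /= => /iter_F_id hu /iter_F_id hv [e1 e2].
  apply: XT_eq => //; apply: funext => i; rewrite (hasper_mod hu) (hasper_mod hv).
  by have := congr1 (fun s => nth false s (i %% n)) e1; rewrite !nth_mkseq ?ltn_pmod.
pose s := allpairs pair [seq w <- allb n | cyc w] (enum 'I_a.+1).
have img : phi @` per_set (@F R a) n = [set` s].
  apply/seteqP; split.
    move=> _ [u Pu <-]; apply/allpairsP; exists (mkseq (xs u) n, xc u); split => //.
      rewrite mem_filter mem_allb size_mkseq eqxx andbT.
      by apply: cyc_mkseq => //; [exact: xgold | exact/iter_F_id].
    by rewrite mem_enum.
  move=> [w c] /allpairsP [[w' c'] [/= hw hc [-> ->]]].
  move: hw; rewrite mem_filter mem_allb => /andP [cw /eqP sw].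
  have hp : hasper (fun i => nth false w' (i %% n)) n by move=> i; rewrite modnDr.
  have pd : exists m, (0 < m)%N /\ hasper (fun i => nth false w' (i %% n)) m by exists n.
  exists (@MkX R a _ c' (gold_nth sw cw) pd); first exact/iter_F_id.
  rewrite /phi /=; congr pair; apply: (@eq_from_nth _ false); rewrite size_mkseq ?sw //.
  by move=> i hi; rewrite nth_mkseq // modn_small.
apply: card_eq_trans (card_esym (inj_card_eq inj)) _.
rewrite img.
have -> : [set` s] = [set x | x \in finmap.seq_fset tt s].
  by apply: eq_set => x; rewrite finmap.seq_fsetE.
apply/card_eq_fsetP.
rewrite finmap.size_seq_fset undup_id; first by rewrite size_allpairs size_enum_ord size_filter.
apply: allpairs_uniq; [exact/filter_uniq/uniq_allb | exact: enum_uniq | by move=> [? ?] [? ?] _ _ ].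
Qed.

End Count.

Lemma card_seq (T : choiceType) (s : seq T) : uniq s -> card_eq [set` s] `I_(size s).
Proof.
move=> us.
have -> : [set` s] = [set x | x \in seq_fset tt s] by apply: eq_set => x; rewrite seq_fsetE.
by apply/card_eq_fsetP; rewrite size_seq_fset undup_id.
Qed.

Lemma order_dvd (T : finType) (s : T -> T) (sinj : injective s) x t :
  iter t s x = x -> (order s x %| t)%N.
Proof.
move=> h.
have hq q : iter (q * order s x) s x = x.
  elim: q => [|q IH] //; by rewrite mulSn addnC iterD (iter_order sinj) IH.
have hr : iter (t %% order s x) s x = x.
  by move: h; rewrite {1}(divn_eq t (order s x)) addnC iterD hq.
have := findex_iter (ltn_pmod t (order_gt0 s x)); rewrite hr.
rewrite /findex /orbit -orderSpred /= eqxx => e.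
by rewrite /dvdn -e.
Qed.

Lemma iter_order_mul (T : finType) (s : T -> T) (sinj : injective s) x q :
  iter (q * order s x) s x = x.
Proof. by elim: q => [|q IH] //; rewrite mulSn addnC iterD (iter_order sinj) IH. Qed.

Lemma dold (T : choiceType) (f : T -> T) (finj : injective f) (U : nat -> nat) k :
  (forall n, (0 < n)%N -> card_eq (per_set f n) `I_(U n)) ->
  (U (2^k) <= U (2^k.+1))%N /\ (2^k.+1 %| U (2^k.+1) - U (2^k))%N.
Proof.
move=> HU.
set N := (2^k.+1)%N; set M := (2^k)%N.
have N0 : (0 < N)%N by rewrite expn_gt0.
have M0 : (0 < M)%N by rewrite expn_gt0.
have NM : N = (M + M)%N by rewrite /N /M expnS mul2n -addnn.
pose P := per_set f N.
have fP : finite_set P by apply/finite_setP; exists (U N); apply: HU.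
pose A := fset_set P.
have inA y : (y \in A) = (iter N f y == y).
  by rewrite in_fset_set //; apply/idP/eqP => [/set_mem|/mem_set].
have sA (x : A) : f (val x) \in A.
  by rewrite inA -iterSr iterS (inj_eq finj) -inA (valP x).
pose s (x : A) : A := FSetSub (sA x).
have sinj : injective s.
  by move=> x y /(congr1 val) /= /finj /val_inj.
have val_iter j x : val (iter j s x) = iter j f (val x).
  by elim: j => //= j ->.
have iterN x : iter N s x = x.
  by apply: val_inj; rewrite val_iter; apply/eqP; rewrite -inA (valP x).
pose Q := [pred x : A | iter M s x == x].
have cardA : #|{: A}| = U N by rewrite -cardfE (card_fset_set (HU N N0)).
have cardQ : #|Q| = U M.
  have e : per_set f M = val @` [set` Q].
    apply/seteqP; split.
      move=> y hy.
      have yA : y \in A by rewrite inA NM iterD hy hy.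
      exists (FSetSub yA) => //; rewrite /= inE; apply/eqP/val_inj; rewrite val_iter /=; exact: hy.
    move=> _ [x Qx <-]; rewrite /per_set /= -val_iter.
    by move: Qx; rewrite /= inE => /eqP ->.
  have c1 : card_eq (per_set f M) `I_#|Q|.
    rewrite e; apply: card_eq_trans (inj_card_eq (in2W val_inj)) _.
    have -> : [set` Q] = [set` enum Q] by apply: eq_set => x; rewrite mem_enum.
    by rewrite cardE; apply: card_seq; exact: enum_uniq.
  by apply/esym/card_eq_II; apply: card_eq_trans (card_esym (HU M M0)) c1.
have cQ := cardC Q.
have Hc : #|[predC Q]| = (fcard s [predC Q] * N)%N.
  symmetry; apply: (fcard_order_set sinj).
    apply/fintype.subsetP => x; rewrite !inE => nQ.
    have := order_dvd sinj (iterN x); case/dvdn_pfactor => // j jle oe.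
    have [jk|jk] : j = k.+1 \/ (j <= k)%N by lia.
      by rewrite oe jk.
    exfalso; move/negP: nQ; apply; apply/eqP.
    have : (order s x %| M)%N by rewrite oe dvdn_exp2l.
    by case/dvdnP => q ->; apply: iter_order_mul.
  move=> x y /eqP <-; rewrite !inE /=.
  by rewrite -iterSr iterS (inj_eq sinj).
split; first by move: cQ; rewrite cardA cardQ => <-; apply: leq_addr.
have -> : (U N - U M = #|[predC Q]|)%N by move: cQ; rewrite cardA cardQ => <-; rewrite addKn.
by rewrite Hc dvdn_mull.
Qed.

Fixpoint fib n := if n is n'.+1 then (if n' is n''.+1 then fib n' + fib n'' else 1) else 0.

Lemma fibSS n : (fib n.+2 = fib n.+1 + fib n)%N. Proof. by []. Qed.

Lemma fib_odd n : odd (fib n) = ~~ (3 %| n)%N.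
Proof.
suff : odd (fib n) = ~~ (3 %| n)%N /\ odd (fib n.+1) = ~~ (3 %| n.+1)%N by case.
elim: n => [|n [IH1 IH2]]; first by [].
split => //; rewrite fibSS oddD IH1 IH2.
case: (boolP (3 %| n)%N) => h1; case: (boolP (3 %| n.+1)%N) => h2; case: (boolP (3 %| n.+2)%N) => h3 //=; lia.
Qed.

Local Open Scope ring_scope.

Lemma U_repr (a b : nat) (U : nat -> nat) :
  U 1 = a -> U 2 = b -> (forall n, (1 <= n)%N -> U n.+2 = (U n.+1 + U n)%N) ->
  forall n, (0 < n)%N -> (U n)%:Z = (a * cnt n)%N%:Z + (b%:Z - 3 * a%:Z) * (fib n.-1)%:Z.
Proof.
move=> U1 U2 HU.
suff H : forall n, (U n.+1)%:Z = (a * cnt n.+1)%N%:Z + (b%:Z - 3 * a%:Z) * (fib n)%:Z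
          /\ (U n.+2)%:Z = (a * cnt n.+2)%N%:Z + (b%:Z - 3 * a%:Z) * (fib n.+1)%:Z.
  by case=> // n _; case: (H n).
elim=> [|n [IH1 IH2]].
  rewrite U1 U2 cnt1 cnt2 /=; split; lia.
split => //; rewrite HU // cnt_rec fibSS.
rewrite !PoszD IH1 IH2 !PoszM !PoszD; ring.
Qed.

Lemma odd_distn x y : odd `|(x%:Z - y%:Z)|%N = odd (x + y)%N.
Proof.
case: (leqP x y) => h.
  by rewrite distnEr // oddB // oddD addbC.
have h' := ltnW h.
by rewrite distnEl // oddB // oddD.
Qed.

Lemma arith (a b : nat) (U : nat -> nat) :
  U 1 = a -> U 2 = b -> (forall n, (1 <= n)%N -> U n.+2 = (U n.+1 + U n)%N) ->
  (forall k, U (2^k) <= U (2^k.+1) /\ 2^k.+1 %| U (2^k.+1) - U (2^k))%N ->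
  (forall k, cnt (2^k) <= cnt (2^k.+1) /\ 2^k.+1 %| cnt (2^k.+1) - cnt (2^k))%N ->
  b = (3 * a)%N.
Proof.
move=> U1 U2 HU dU dC.
set D := (b%:Z - 3 * a%:Z).
have key k : (2^k.+1 %| `|D|)%N.
  set N := (2^k.+1)%N; set M := (2^k)%N.
  have N0 : (0 < N)%N by rewrite expn_gt0.
  have M0 : (0 < M)%N by rewrite expn_gt0.
  have [le1 d1] := dU k; have [le2 d2] := dC k.
  have e : ((U N)%:Z - (U M)%:Z) - a%:Z * ((cnt N)%:Z - (cnt M)%:Z)
           = D * ((fib N.-1)%:Z - (fib M.-1)%:Z).
    rewrite (U_repr U1 U2 HU N0) (U_repr U1 U2 HU M0) !PoszM; rewrite /D; ring.
  have dd : (N%:Z %| D * ((fib N.-1)%:Z - (fib M.-1)%:Z))%Z.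
    rewrite -e; apply: rpredB.
      by rewrite subzn // dvdzE /=.
    by apply: dvdz_mull; rewrite subzn // dvdzE /=.
  move: dd; rewrite dvdzE abszM /= Gauss_dvdl //.
  rewrite /N coprimeXl // coprime2n odd_distn oddD !fib_odd.
  have h3 : ~~ (3 %| M)%N by rewrite /M Euclid_dvdX.
  have NM : N = (M + M)%N by rewrite /N /M expnS mul2n -addnn.
  rewrite -/N NM; move: h3 M0; case: (boolP (3 %| (M + M).-1)%N); case: (boolP (3 %| M.-1)%N) => //=; lia.
have : absz D = 0%N.
  apply/eqP; apply: contraT => hD; rewrite -lt0n in hD.
  have h1 := dvdn_leq hD (key `|D|%N).
  have h2 : (`|D| < 2 ^ `|D|.+1)%N.
    by apply: ltn_trans (ltn_expl _ (isT : (1 < 2)%N)) _; rewrite ltn_exp2l.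
  by rewrite ltnNge h1 in h2.
move=> h0; have : D == 0 by rewrite -absz_eq0 h0.
rewrite /D subr_eq0 => /eqP h; lia.
Qed.

Close Scope ring_scope.
Close Scope classical_set_scope.

Theorem theorem1 (R : realType) (a b : nat) (U : nat -> nat) :
  (0 < a)%N -> (0 < b)%N ->
  U 1 = a -> U 2 = b ->
  (forall n : nat, (1 <= n)%N -> U n.+2 = U n.+1 + U n) ->
  (exactly_realizable R U <-> b = 3 * a).
Proof.
move=> a0 b0 U1 U2 HU; split.
  case=> X [f [_ [g [fg gf _ _]] Hc]].
  apply: (arith U1 U2 HU).
    by move=> k; apply: (dold (can_inj fg)) Hc.
  move=> k.
  have := @dold (XT R 0) (@F R 0) (can_inj (@FK R 0)) (fun n => cnt n * 1)%N k
    (fun n n0 => @per_card R 0 n n0).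
  by rewrite !muln1.
move=> b3; case: a a0 U1 b3 => // a' _ U1 b3.
exists (XT R a'), (@F R a'); split; [exact: X_compact | exact: F_homeo |].
move=> n n0.
have -> : U n = (cnt n * a'.+1)%N.
  have := U_repr U1 U2 HU n0; rewrite b3 => h; nia.
exact: per_card.
Qed.
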